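(* Let $(X,d)$ be a finite ultrametric space with $|X|\geqslant 2$ and $X\cap\operatorname{Sp}(X)=\varnothing$. Then $(X,d)\in\mathfrak U$ if and only if the representing tree $T_X$ of $(X,d)$ is strictly binary and distinct internal nodes of $T_X$ carry distinct labels.
   Context: $\operatorname{Sp}(X)=\{d(x,y):x\neq y\}$, $\operatorname{diam}X=\max d(x,y)$; $\mathfrak U$ is the class of finite ultrametric spaces $X$ with $|\operatorname{Sp}(X)|=|X|-1$. For a finite ultrametric space with $|X|\ge2$, the relation $x\sim y\iff d(x,y)<\operatorname{diam}X$ is an equivalence relation with $k\geqslant 2$ classes $X_1,\dots,X_k$; these are the parts of the diametral graph $G_d$ (vertices $X$, edges the pairs at distance $\operatorname{diam}X$), which is complete $k$-partite $G[X_1,\dots,X_k]$. The representing tree $T_X$ (a labelled rooted tree) is defined recursively: if $X=\{x\}$, $T_X$ is a single node labelled $x$. If $|X|\geqslant2$, the root is labelled $\operatorname{diam}X$ and has $k$ children, one for each part $X_i$, the child for $X_i$ being labelled $\operatorname{diam}X_i$ if $|X_i|\ge2$ and labelled $x$ if $X_i=\{x\}$; the subtree below the child for $X_i$ with $|X_i|\ge 2$ is built from the subspace $X_i$ in the same way. Thus leaves are labelled by the points of $X$ (bijectively) and internal nodes by elements of $\operatorname{Sp}(X)$. A strictly binary tree is a rooted tree whose root is adjacent to exactly two nodes and whose non-root internal nodes (non-leaves) are adjacent to exactly three nodes; a one-node tree is strictly binary. *)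

(* Defs.v *)
From HB Require Import structures.
From mathcomp Require Import all_boot all_order all_algebra.
From mathcomp Require Import reals.
Set Implicit Arguments. Unset Strict Implicit. Unset Printing Implicit Defensive.
Import Order.TTheory GRing.Theory Num.Theory.
Local Open Scope ring_scope.

Inductive ltree (L : Type) : Type := LNode of L & seq (ltree L).

Section Trees.
Variable L : eqType.

(* Strictly binary: the root (if it is not a leaf) is adjacent to exactly two
   nodes, i.e. has exactly 2 children; every non-root internal node is adjacent
   to exactly three nodes (its parent and its children), i.e. has exactly
   2 children. *)
Fixpoint strictly_binary (t : ltree L) : bool :=
  let: LNode _ ts := t in
  ((size ts == 0%N) || (size ts == 2%N)) &&
  (fix all_sb (us : seq (ltree L)) : bool :=
     if us is u :: us' then strictly_binary u && all_sb us' else true) ts.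

Fixpoint internal_labels (t : ltree L) : seq L :=
  let: LNode a ts := t in
  (if ts is [::] then [::] else [:: a]) ++
  (fix labs (us : seq (ltree L)) : seq L :=
     if us is u :: us' then internal_labels u ++ labs us' else [::]) ts.

Definition internal_labels_distinct (t : ltree L) : bool :=
  uniq (internal_labels t).
End Trees.

Section Ultrametric.
Variables (R : realType) (T : finType) (d : T -> T -> R).

Definition is_ultrametric : Prop :=
  [/\ forall x y, 0 <= d x y,
      forall x y, d x y = 0 <-> x = y,
      forall x y, d x y = d y x &
      forall x y z, d x z <= Num.max (d x y) (d y z)].

Definition spectrum : seq R :=
  undup [seq d p.1 p.2 | p <- enum [set p : T * T | p.1 != p.2]].

Definition in_frakU : Prop :=
  is_ultrametric /\ size spectrum = (#|T| - 1)%N.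

(* diam A = max of d(x,y) over x, y in A (0 for |A| <= 1) *)
Definition diam (A : {set T}) : R :=
  \big[Num.max/0]_(x in A) \big[Num.max/0]_(y in A) d x y.

Definition diam_parts (A : {set T}) : {set {set T}} :=
  equivalence_partition (fun x y => d x y < diam A) A.

Definition leaf_of (A : {set T}) : ltree (T + R) :=
  match [pick x in A] with
  | Some x => LNode (inl x) [::]
  | None => LNode (inr 0) [::]   (* A empty: never used *)
  end.

(* The recursive construction of the representing tree of the subspace A;
   n is fuel (#|A| <= n suffices). Leaves are labelled by points (inl),
   internal nodes by diameters (inr). *)
Fixpoint rep_tree_aux (n : nat) (A : {set T}) : ltree (T + R) :=
  if n is n'.+1 then
    if (1 < #|A|)%N then
      LNode (inr (diam A)) [seq rep_tree_aux n' B | B <- enum (diam_parts A)]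
    else leaf_of A
  else leaf_of A.

Definition rep_tree : ltree (T + R) := rep_tree_aux #|T| [set: T].
End Ultrametric.

(* Main.v *)
Require Import Defs.
From HB Require Import structures.
From mathcomp Require Import all_boot all_order all_algebra.
From mathcomp Require Import reals.
From mathcomp Require Import zify.
Import Order.TTheory GRing.Theory Num.Theory.
Set Implicit Arguments. Unset Strict Implicit. Unset Printing Implicit Defensive.
Local Open Scope ring_scope.

Lemma sb_node (L : eqType) (a : L) ts :
  strictly_binary (LNode a ts) =
  ((size ts == 0%N) || (size ts == 2%N)) && all (@strictly_binary L) ts.
Proof. rewrite /=; congr (_ && _); by elim: ts => //= u us ->. Qed.

Lemma il_node (L : eqType) (a : L) (ts : seq (ltree L)) : (0 < size ts)%N ->
  internal_labels (LNode a ts) = a :: flatten (map (@internal_labels L) ts).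
Proof.
case: ts => // u us _; rewrite /=; congr (_ :: _).
by elim: us u => //= v vs IH u; rewrite IH.
Qed.

Lemma leaf_ofE (R : realType) (T : finType) (A : {set T}) :
  exists a, leaf_of R A = LNode a [::].
Proof. rewrite /leaf_of; case: pickP => [x _|_]; eexists; reflexivity. Qed.

Lemma dpos (R : realType) (T : finType) (d : T -> T -> R) :
  is_ultrametric d -> forall x y, x != y -> 0 < d x y.
Proof.
case=> H0 H1 _ _ x y xy; rewrite lt_neqAle H0 andbT eq_sym.
by apply/eqP => /H1 E; rewrite E eqxx in xy.
Qed.

Lemma diam_ge (R : realType) (T : finType) (d : T -> T -> R) (A : {set T}) x y :
  x \in A -> y \in A -> d x y <= diam d A.
Proof.
move=> xA yA; rewrite /diam.
apply: (bigmax_sup x) => //.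
exact: (bigmax_sup y).
Qed.

Lemma diam_att (R : realType) (T : finType) (d : T -> T -> R) (A : {set T}) x0 :
  is_ultrametric d -> x0 \in A -> exists x y, [/\ x \in A, y \in A & diam d A = d x y].
Proof.
case=> H0 _ _ _ x0A; rewrite /diam.
have h1 : forall i, i \in A -> 0 <= \big[Num.max/0]_(y in A) d i y.
  by move=> i _; apply: (bigmax_sup x0).
have [x xA ->] := @eq_bigmax _ _ _ 0 x0 (fun x => x \in A)
   (fun x => \big[Num.max/0]_(y in A) d x y) x0A h1.
have h2 : forall i, i \in A -> 0 <= d x i by [].
have [y yA ->] := @eq_bigmax _ _ _ 0 x0 (fun y => y \in A) (fun y => d x y) x0A h2.
by exists x, y.
Qed.

Lemma diam_pos (R : realType) (T : finType) (d : T -> T -> R) (A : {set T}) :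
  is_ultrametric d -> (1 < #|A|)%N -> 0 < diam d A.
Proof.
move=> Hu /card_gt1P [x [y [xA yA xy]]].
have := dpos Hu xy; have := diam_ge d xA yA.
move=> h1 h2; exact: lt_le_trans h2 h1.
Qed.

Lemma diam_rel_equiv (R : realType) (T : finType) (d : T -> T -> R) (A : {set T}) :
  is_ultrametric d -> (1 < #|A|)%N ->
  {in A & &, equivalence_rel (fun x y => d x y < diam d A)}.
Proof.
move=> Hu HA; have [H0 H1 Hs Ht] := Hu.
move=> x y z _ _ _; split.
  have -> : d z z = 0 by apply/H1.
  exact: diam_pos.
move=> Hxy; apply/idP/idP => H.
  by apply: le_lt_trans (Ht y x z) _; rewrite gt_max Hs Hxy H.
by apply: le_lt_trans (Ht x y z) _; rewrite gt_max Hxy H.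
Qed.

Lemma parts_part (R : realType) (T : finType) (d : T -> T -> R) (A : {set T}) :
  is_ultrametric d -> (1 < #|A|)%N -> partition (diam_parts d A) A.
Proof. by move=> Hu HA; apply: equivalence_partitionP; apply: diam_rel_equiv. Qed.

Lemma parts_pblock (R : realType) (T : finType) (d : T -> T -> R) (A : {set T}) :
  is_ultrametric d -> (1 < #|A|)%N ->
  {in A &, forall x y, (y \in pblock (diam_parts d A) x) = (d x y < diam d A)}.
Proof.
by move=> Hu HA; apply: (pblock_equivalence_partition (R := fun x y => d x y < diam d A)); apply: diam_rel_equiv.
Qed.

Lemma parts_lt (R : realType) (T : finType) (d : T -> T -> R) (A : {set T}) B :
  is_ultrametric d -> (1 < #|A|)%N -> B \in diam_parts d A -> (0 < #|B| < #|A|)%N.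
Proof.
move=> Hu HA BP; have Hp := parts_part Hu HA.
have /and3P [/eqP Hc Ht H0] := Hp.
have BA : B \subset A by rewrite -Hc; apply: bigcup_sup.
rewrite card_gt0; apply/andP; split; first by apply/eqP => E; rewrite -E BP in H0.
apply: proper_card; rewrite properE BA /=; apply/negP => AB.
have [x [y [xA yA E]]] : exists x y, [/\ x \in A, y \in A & diam d A = d x y].
  have /card_gt1P [a [_ [aA _ _]]] := HA; exact: diam_att Hu aA.
have xB := subsetP AB x xA; have yB := subsetP AB y yA.
have := parts_pblock Hu HA xA yA.
by rewrite (def_pblock Ht BP xB) yB -E ltxx.
Qed.

Lemma parts_card (R : realType) (T : finType) (d : T -> T -> R) (A : {set T}) :
  is_ultrametric d -> (1 < #|A|)%N -> (1 < #|diam_parts d A|)%N.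
Proof.
move=> Hu HA; have Hp := parts_part Hu HA.
have /and3P [/eqP Hc Ht H0] := Hp.
have [x [y [xA yA E]]] : exists x y, [/\ x \in A, y \in A & diam d A = d x y].
  have /card_gt1P [a [_ [aA _ _]]] := HA; exact: diam_att Hu aA.
apply/card_gt1P; exists (pblock (diam_parts d A) x), (pblock (diam_parts d A) y).
split; try (apply: pblock_mem; by rewrite Hc).
apply/eqP => E2.
have : y \in pblock (diam_parts d A) x by rewrite E2 mem_pblock Hc.
by rewrite parts_pblock // -E ltxx.
Qed.

Lemma arith1 (a b X Y : nat) : (a < b)%N -> (a.+1 + X)%N = (b + Y)%N -> (X <= Y)%N -> a.+1 = b.
Proof. lia. Qed.

Lemma main_ind (R : realType) (T : finType) (d : T -> T -> R) :
  is_ultrametric d -> forall n (A : {set T}), (0 < #|A| <= n)%N ->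
  [/\ ((size (internal_labels (rep_tree_aux d n A))).+1 <= #|A|)%N,
      strictly_binary (rep_tree_aux d n A) =
        ((size (internal_labels (rep_tree_aux d n A))).+1 == #|A|)
    & forall z, (z \in internal_labels (rep_tree_aux d n A)) =
        [exists x in A, exists y in A, (x != y) && (z == inr (d x y))]].
Proof.
move=> Hu; elim=> [|n IH] A /andP [A0 An]; first by lia.
simpl rep_tree_aux; case: ifP => HA; last first.
  have A1 : #|A| = 1%N by lia.
  have [a ->] := leaf_ofE R A; rewrite /= A1; split => // z.
  apply/esym/negbTE; apply/existsP => [[x /andP [xA /existsP [y /andP [yA /andP [xy _]]]]]].
  have : (1 < #|A|)%N by apply/card_gt1P; exists x, y.
  by rewrite HA.
have Hp := parts_part Hu HA.
have kP := parts_card Hu HA.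
set P := diam_parts d A; set f := rep_tree_aux d n.
rewrite -/P in kP Hp.
have /and3P [/eqP Hc Ht H0] := Hp.
have Hch : forall B, B \in P -> [/\ ((size (internal_labels (f B))).+1 <= #|B|)%N,
      strictly_binary (f B) = ((size (internal_labels (f B))).+1 == #|B|)
    & forall z, (z \in internal_labels (f B)) =
        [exists x in B, exists y in B, (x != y) && (z == inr (d x y))]].
  by move=> B BP; apply: IH; have := parts_lt Hu HA BP; lia.
have Hsz : (0 < size [seq f B | B <- enum P])%N by rewrite size_map -cardE; exact: ltnW kP.
rewrite sb_node il_node //= size_map -cardE.
have Hsum : size (flatten [seq internal_labels i | i <- [seq f B | B <- enum P]]) =
    (\sum_(B in P) size (internal_labels (f B)))%N.
  by rewrite size_flatten /shape -!map_comp sumnE big_map big_enum.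
have Hcard := card_partition Hp.
have Hle : (\sum_(B in P) (size (internal_labels (f B))).+1 <= \sum_(B in P) #|B|)%N.
  by apply: leq_sum => B BP; have [] := Hch B BP.
have Hs1 : (\sum_(B in P) (size (internal_labels (f B))).+1 =
            \sum_(B in P) size (internal_labels (f B)) + #|P|)%N.
  by rewrite -sum1_card -big_split /=; apply: eq_bigr => B _; rewrite addn1.
rewrite Hsum; split.
- lia.
- rewrite all_map; apply/idP/idP.
  + case/andP => Hk /allP Hall.
    have Hk2 : #|P| = 2%N by case/orP: Hk => /eqP E; [rewrite E in kP | exact E].
    have Heq : (\sum_(B in P) (size (internal_labels (f B))).+1 = \sum_(B in P) #|B|)%N.
      apply: eq_bigr => B BP; have [_ E _] := Hch B BP.
      by apply/eqP; rewrite -E; apply: (Hall B); rewrite mem_enum.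
    apply/eqP; lia.
  + move/eqP => Heq.
    have Hk2 : #|P| = 2%N by lia.
    rewrite Hk2 orbT /=; apply/allP => B; rewrite mem_enum => BP /=.
    have [h1 -> _] := Hch B BP; apply/eqP.
    have Htot : (\sum_(C in P) (size (internal_labels (f C))).+1 = \sum_(C in P) #|C|)%N by lia.
    rewrite [X in X = _](bigD1 B BP) [X in _ = X](bigD1 B BP) /= in Htot.
    move: Htot; set X := (X in (_ + X = _)%N); set Y := (X in (_ = _ + X)%N) => Htot.
    have HXY : (X <= Y)%N.
      by rewrite /X /Y; apply: leq_sum => C /andP [CP _]; have [] := Hch C CP.
    clearbody X Y; exact: arith1 h1 Htot HXY.
- move=> z; rewrite in_cons -map_comp; apply/idP/idP.
  + case/orP => [/eqP -> | Hz].
    * have /card_gt1P [a [_ [aA _ _]]] := HA.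
      have [x [y [xA yA E]]] := diam_att Hu aA.
      apply/existsP; exists x; rewrite xA /=; apply/existsP; exists y.
      rewrite yA E eqxx andbT /=; apply/eqP => exy; move: E; rewrite exy.
      have [_ H1 _ _] := Hu; rewrite (proj2 (H1 y y) erefl) => E.
      by have := diam_pos Hu HA; rewrite E ltxx.
    * move/flatten_mapP: Hz => [B BP zt].
      rewrite mem_enum in BP; have [_ _ Hl] := Hch B BP.
      have BA : B \subset A by rewrite -Hc; apply: bigcup_sup.
      rewrite Hl in zt.
      move/existsP: zt => [x /andP [xB /existsP [y /andP [yB H]]]].
      apply/existsP; exists x; rewrite (subsetP BA x xB) /=.
      by apply/existsP; exists y; rewrite (subsetP BA y yB) H.
  + case/existsP => x /andP [xA /existsP [y /andP [yA /andP [xy /eqP ->]]]].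
    have := diam_ge d xA yA; rewrite le_eqVlt => /orP [/eqP -> | lt].
      by rewrite eqxx.
    apply/orP; right.
    have xc : x \in cover P by rewrite Hc.
    have BP := pblock_mem xc.
    have xB : x \in pblock P x by rewrite mem_pblock.
    have yB : y \in pblock P x by rewrite /P parts_pblock.
    apply/flatten_mapP; exists (pblock P x); first by rewrite mem_enum.
    have [_ _ ->] := Hch _ BP.
    apply/existsP; exists x; rewrite xB /=.
    by apply/existsP; exists y; rewrite yB xy eqxx.
Qed.

Theorem theorem13 (R : realType) (T : finType) (d : T -> T -> R) :
  is_ultrametric d -> (2 <= #|T|)%N ->
  (in_frakU d <->
   strictly_binary (rep_tree d) /\ internal_labels_distinct (rep_tree d)).
Proof.
move=> Hu HT; rewrite /rep_tree /internal_labels_distinct.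
set t := rep_tree_aux d #|T| [set: T].
have HA : (0 < #|[set: T]| <= #|T|)%N by rewrite cardsT; lia.
have [H1 H2 H3] := main_ind Hu HA.
rewrite -/t cardsT in H1 H2 H3.
have Hspec : size (spectrum d) = size (undup (internal_labels t)).
  rewrite -(size_map (@inr T R)); apply/perm_size/uniq_perm.
  - rewrite map_inj_uniq; first exact: undup_uniq.
    by move=> a b [].
  - exact: undup_uniq.
  - move=> z; rewrite mem_undup H3; apply/mapP/existsP.
    + case=> r; rewrite /spectrum mem_undup => /mapP [p].
      rewrite mem_enum inE => pS -> ->.
      exists p.1; rewrite in_setT /=; apply/existsP; exists p.2.
      by rewrite in_setT pS eqxx.
    + case=> x /andP [_ /existsP [y /andP [_ /andP [xy /eqP ->]]]].
      exists (d x y) => //; rewrite /spectrum mem_undup; apply/mapP.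
      by exists (x, y); rewrite // mem_enum inE.
rewrite /in_frakU; split.
- case=> _ Hs.
  have Hu1 := size_undup (internal_labels t).
  have Hu2 := ltn_size_undup (internal_labels t).
  split.
    by rewrite H2; apply/eqP; lia.
  apply: contraT => nu; move: Hu2; rewrite nu => Hlt; lia.
- case=> sb u; split => //.
  rewrite Hspec (undup_id u); move: H2; rewrite sb => /esym/eqP; lia.
Qed.
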